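(* Let $p,r\in\mathbb{C}$ with $p$ not a root of unity. For all integers $m,n\ge 0$, $$H_{m,n}(x,y;p,r)=\sum_{k=0}^{\min(m,n)}\frac{(-1)^k p^{\binom{k}{2}}(p;p)_m(p;p)_n\,r^k}{(p;p)_{m-k}(p;p)_{n-k}(p;p)_k}\,H_{m-k}(x;p)\,H_{n-k}(y;p).$$ In particular $H_{m,n}(x,y;p,r)=H_{n,m}(y,x;p,r)$ for all $m,n\ge 0$.
   Context: For $a,p\in\mathbb{C}$ let $(a;p)_0=1$ and $(a;p)_k=\prod_{l=0}^{k-1}(1-ap^l)$. The continuous $p$-Hermite polynomials $H_n(x;p)\in\mathbb{C}[x]$ are defined by $H_{-1}(x;p)=0$, $H_0(x;p)=1$ and $H_{n+1}(x;p)=2xH_n(x;p)-(1-p^n)H_{n-1}(x;p)$ for $n\ge0$. The bivariate continuous $p$-Hermite polynomials $H_{m,n}(x,y;p,r)\in\mathbb{C}[x,y]$, $m,n\ge 0$, are defined by setting $H_{-1,n}=H_{m,-1}=0$, $H_{0,n}(x,y;p,r)=H_n(y;p)$, and, for all $m,n\ge0$, $$H_{m+1,n}(x,y;p,r)=2xH_{m,n}(x,y;p,r)-(1-p^m)H_{m-1,n}(x,y;p,r)-p^m(1-p^n)\,r\,H_{m,n-1}(x,y;p,r).$$ *)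

(* Defs.v *)
From HB Require Import structures.
From mathcomp Require Import all_boot all_order all_algebra.
From mathcomp Require Import complex.
From mathcomp Require Import reals.
Set Implicit Arguments. Unset Strict Implicit. Unset Printing Implicit Defensive.
Import Order.TTheory GRing.Theory Num.Theory.
Local Open Scope ring_scope.

Section Defs.
Variable F : comRingType.

Definition qpoch (a p : F) (k : nat) : F := \prod_(l < k) (1 - a * p ^+ l).

(* (H_{n-1}, H_n) for the continuous p-Hermite polynomials *)
Fixpoint hermite_pair (p : F) (n : nat) : {poly F} * {poly F} :=
  match n with
  | 0 => (0, 1)
  | n'.+1 => let (a, b) := hermite_pair p n' in
             (b, 2%:R *: ('X * b) - (1 - p ^+ n') *: a)
  end.

Definition hermite (p : F) (n : nat) : {poly F} := (hermite_pair p n).2.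

(* Bivariate polynomials in x, y are elements of {poly {poly F}}, with
   x := 'X (outer variable) and y := 'Y = 'X%:P (inner variable), following
   polyXY.  H_n(x;p) is (hermite p n)^:P and H_n(y;p) is (hermite p n)%:P. *)

(* (H_{m-1, .}, H_{m, .}) as functions of n *)
Fixpoint biherm_pair (p r : F) (m : nat)
  : (nat -> {poly {poly F}}) * (nat -> {poly {poly F}}) :=
  match m with
  | 0 => (fun _ => 0, fun n => (hermite p n)%:P)
  | m'.+1 => let (a, b) := biherm_pair p r m' in
     (b, fun n => 2%:R%:P%:P * ('X * b n) - (1 - p ^+ m')%:P%:P * a n
                  - (p ^+ m' * (1 - p ^+ n) * r)%:P%:P *
                    (match n with 0 => 0 | n'.+1 => b n' end))
  end.

Definition biherm (p r : F) (m n : nat) : {poly {poly F}} :=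
  (biherm_pair p r m).2 n.

End Defs.

(* Main.v *)
Require Import Defs.
From HB Require Import structures.
From mathcomp Require Import all_boot all_order all_algebra.
From mathcomp Require Import complex.
From mathcomp Require Import reals.
From mathcomp Require Import ring zify.
Import Order.TTheory GRing.Theory Num.Theory.
Local Open Scope ring_scope.

Set Implicit Arguments. Unset Strict Implicit. Unset Printing Implicit Defensive.
Section H.
Variable F : fieldType.
Variables p r : F.
Hypothesis hQ : forall k : nat, 1 - p ^+ k.+1 != 0.

Lemma hermite_pairS n : hermite_pair p n.+1 =
  ((hermite_pair p n).2, 2%:R *: ('X * (hermite_pair p n).2) - (1 - p ^+ n) *: (hermite_pair p n).1).
Proof. by rewrite /=; case: (hermite_pair p n). Qed.

Lemma hermite_rec j : 2%:R%:P * ('X * hermite p j) =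
  hermite p j.+1 + (1 - p ^+ j)%:P * hermite p j.-1.
Proof.
rewrite /hermite !mul_polyC.
case: j => [|j] /=; first by rewrite expr0 subrr !scale0r subr0 addr0.
case: (hermite_pair p j) => a b /=.
by rewrite subrK.
Qed.

Lemma hermite_recX j : 2%:R%:P%:P * ('X * (hermite p j)^:P) =
  (hermite p j.+1)^:P + (1 - p ^+ j)%:P%:P * (hermite p j.-1)^:P.
Proof.
have e1 : (2%:R%:P%:P : {poly {poly F}}) = (2%:R%:P)^:P by rewrite map_polyC.
have e2 : ((1 - p ^+ j)%:P%:P : {poly {poly F}}) = ((1 - p ^+ j)%:P)^:P by rewrite map_polyC.
by rewrite e1 e2 -[X in X * (hermite p j)^:P](map_polyX (polyC : {rmorphism F -> {poly F}})) -!rmorphM -rmorphD hermite_rec.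
Qed.

Lemma bpS m : biherm_pair p r m.+1 = ((biherm_pair p r m).2,
  fun n => 2%:R%:P%:P * ('X * (biherm_pair p r m).2 n) - (1 - p ^+ m)%:P%:P * (biherm_pair p r m).1 n
                  - (p ^+ m * (1 - p ^+ n) * r)%:P%:P *
                    (match n with 0 => 0 | n'.+1 => (biherm_pair p r m).2 n' end)).
Proof. by rewrite /=; case: (biherm_pair p r m). Qed.

Definition Q k := qpoch p p k.
Definition d (m k : nat) : F := \prod_(l < k) (1 - p ^+ (m - l)).
Definition A k := (-1) ^+ k * p ^+ 'C(k, 2) * r ^+ k / Q k.
Definition c m n k := A k * d m k * d n k.
Definition X j : {poly {poly F}} := (hermite p j)^:P.
Definition Y j : {poly {poly F}} := (hermite p j)%:P.
Definition T m n k := (c m n k)%:P%:P * X (m - k) * Y (n - k).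
Definition G N m n := \sum_(k < N) T m n k.

Lemma d0 m : d m 0 = 1. Proof. by rewrite /d big_ord0. Qed.
Lemma dS m k : d m k.+1 = d m k * (1 - p ^+ (m - k)).
Proof. by rewrite /d big_ord_recr. Qed.
Lemma dSS m k : d m.+1 k.+1 = (1 - p ^+ m.+1) * d m k.
Proof. by rewrite /d big_ord_recl subn0; congr (_ * _); apply: eq_bigr => i _; rewrite /bump /= add1n subSS. Qed.
Lemma dz m k : (m < k)%N -> d m k = 0.
Proof.
move=> mk; rewrite /d (bigD1 (Ordinal mk)) //= subnn expr0 subrr mul0r //.
Qed.

Lemma QnZ k : Q k != 0.
Proof.
rewrite /Q /qpoch; apply/prodf_neq0 => i _; rewrite -exprS; exact: hQ.
Qed.

Lemma QS k : Q k.+1 = Q k * (1 - p ^+ k.+1).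
Proof. by rewrite /Q /qpoch big_ord_recr /= exprS. Qed.

Lemma Qd j k : Q (j + k) = Q j * d (j + k) k.
Proof.
elim: k => [|k IH]; first by rewrite addn0 d0 mulr1.
by rewrite addnS QS IH dSS mulrAC mulrA.
Qed.

Lemma AS k : A k.+1 * (1 - p ^+ k.+1) = - (p ^+ k * r * A k).
Proof.
rewrite /A QS binS bin1 exprD exprS (exprS r).
have h1 := QnZ k; have h2 := hQ k.
field; by rewrite h1 h2.
Qed.

Lemma key m k : p ^+ k * (d m.+1 k.+1 - d m k.+1) = p ^+ m * (1 - p ^+ k.+1) * d m k.
Proof.
case: (leqP k m) => km; last first.
  have h1 : d m k = 0 := dz km.
  have h2 : d m k.+1 = 0 by apply: dz; lia.
  have h3 : d m.+1 k.+1 = 0 by apply: dz; lia.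
  by rewrite h1 h2 h3 subrr !mulr0.
rewrite dSS dS.
have -> : p ^+ m = p ^+ k * p ^+ (m - k) by rewrite -exprD subnKC.
have -> : p ^+ m.+1 = p ^+ k.+1 * p ^+ (m - k) by rewrite -exprD addSn subnKC.
rewrite exprS; ring.
Qed.

Lemma key2 m k : d m.+1 k.+1 - d m k.+1 = p ^+ (m - k) * (1 - p ^+ k.+1) * d m k.
Proof.
case: (leqP k m) => km; last first.
  have h1 : d m k = 0 := dz km.
  have h2 : d m k.+1 = 0 by apply: dz; lia.
  have h3 : d m.+1 k.+1 = 0 by apply: dz; lia.
  by rewrite h1 h2 h3 subrr !mulr0.
rewrite dSS dS.
have -> : p ^+ m.+1 = p ^+ k.+1 * p ^+ (m - k) by rewrite -exprD addSn subnKC.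
ring.
Qed.

Lemma coefrec m n' i : c m.+1 n'.+1 i.+1 - c m n'.+1 i.+1 = - (p ^+ m * (1 - p ^+ n'.+1) * r * c m n' i).
Proof.
rewrite /c.
have -> : A i.+1 * d m.+1 i.+1 * d n'.+1 i.+1 - A i.+1 * d m i.+1 * d n'.+1 i.+1
   = A i.+1 * (d m.+1 i.+1 - d m i.+1) * d n'.+1 i.+1 by ring.
rewrite key2 dSS.
case: (leqP i m) => im; last by rewrite dz // !(mulr0, mul0r, oppr0).
have -> : p ^+ m = p ^+ i * p ^+ (m - i) by rewrite -exprD subnKC.
transitivity ((A i.+1 * (1 - p ^+ i.+1)) * (p ^+ (m - i) * d m i * ((1 - p ^+ n'.+1) * d n' i))); first by ring.
rewrite AS; ring.
Qed.

Lemma T_zero m n k : (minn m n < k)%N -> T m n k = 0.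
Proof.
rewrite gtn_min => /orP [h|h]; by rewrite /T /c (dz h) ?mulr0 ?mul0r.
Qed.

Lemma Gwiden N K m n : (minn m n < K)%N -> (K <= N)%N -> G N m n = G K m n.
Proof.
move=> mK KN; rewrite /G (big_ord_widen N (T m n) KN) [RHS]big_mkcond.
apply: eq_bigr => k _; case: ifP => // /negbT; rewrite -leqNgt => h.
by rewrite T_zero //; apply: leq_trans mK h.
Qed.

Lemma c0 m n : c m n 0 = 1.
Proof. have e : 'C(0, 2) = 0%N by []. by rewrite /c /A !d0 /Q /qpoch big_ord0 e !expr0 !mulr1 invr1 mul1r. Qed.

Lemma G2X N m n : 2%:R%:P%:P * ('X * G N m n) =
  \sum_(k < N) (c m n k)%:P%:P * X (m - k).+1 * Y (n - k) +
  \sum_(k < N) (c m n k * (1 - p ^+ (m - k)))%:P%:P * X (m - k).-1 * Y (n - k).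
Proof.
rewrite /G mulr_sumr mulr_sumr -big_split /=; apply: eq_bigr => k _; rewrite /T /X.
transitivity ((c m n k)%:P%:P * (2%:R%:P%:P * ('X * (hermite p (m - k))^:P)) * Y (n - k)); first by ring.
have e : ((c m n k * (1 - p ^+ (m - k)))%:P%:P : {poly {poly F}}) = (c m n k)%:P%:P * (1 - p ^+ (m - k))%:P%:P by rewrite !polyCM.
rewrite hermite_recX e. ring.
Qed.

Lemma polyCCM (a b : F) : ((a * b)%:P%:P : {poly {poly F}}) = a%:P%:P * b%:P%:P.
Proof. by rewrite !polyCM. Qed.
Lemma polyCCN (a : F) : ((- a)%:P%:P : {poly {poly F}}) = - a%:P%:P.
Proof. by rewrite !polyCN. Qed.
Lemma polyCCB (a b : F) : ((a - b)%:P%:P : {poly {poly F}}) = a%:P%:P - b%:P%:P.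
Proof. by rewrite !polyCB. Qed.

Lemma E2 N m n : \sum_(k < N) (c m n k * (1 - p ^+ (m - k)))%:P%:P * X (m - k).-1 * Y (n - k)
   = (1 - p ^+ m)%:P%:P * G N m.-1 n.
Proof.
rewrite /G mulr_sumr; apply: eq_bigr => k _; rewrite /T.
have -> : (m - k).-1 = (m.-1 - k)%N by lia.
case: m => [|m].
  by rewrite !sub0n !expr0 !subrr mulr0 !polyC0 !mul0r.
have e : c m.+1 n k * (1 - p ^+ (m.+1 - k)) = (1 - p ^+ m.+1) * c m n k.
  rewrite /c; transitivity (A k * d n k * (d m.+1 k * (1 - p ^+ (m.+1 - k)))); first by ring.
  rewrite -dS dSS; ring.
by rewrite e (polyCCM (1 - p ^+ m.+1)) /=; ring.
Qed.

Lemma S1eq N m n : \sum_(k < N) (c m n k)%:P%:P * X (m - k).+1 * Y (n - k)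
  = \sum_(k < N) (c m n k)%:P%:P * X (m.+1 - k) * Y (n - k).
Proof.
apply: eq_bigr => k _; case: (leqP k m) => km; first by rewrite subSn.
by rewrite /c (dz km) mulr0 mul0r !polyC0 !mul0r.
Qed.

Lemma E3 N m n : (m.+1 < N)%N ->
  \sum_(k < N) (c m.+1 n k - c m n k)%:P%:P * X (m.+1 - k) * Y (n - k)
  = - ((p ^+ m * (1 - p ^+ n) * r)%:P%:P * (match n with 0 => 0 | n'.+1 => G N m n' end)).
Proof.
case: N => [//|N'] mN.
rewrite big_ord_recl /= !c0 subrr !polyC0 !mul0r add0r.
case: n => [|n'].
  rewrite mulr0 oppr0; apply: big1 => i _.
  by rewrite /bump add1n /c (@dz 0 i.+1) // !mulr0 subrr !polyC0 !mul0r.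
rewrite /G big_ord_recr /= T_zero; last by rewrite (leq_ltn_trans (geq_minl _ _)).
rewrite addr0 mulr_sumr -sumrN; apply: eq_bigr => i _.
rewrite /bump /= add1n !subSS coefrec /T polyCCN (polyCCM (p ^+ m * (1 - p ^+ n'.+1) * r)).
ring.
Qed.

Lemma Grec N m n : (m.+1 < N)%N ->
  G N m.+1 n = 2%:R%:P%:P * ('X * G N m n) - (1 - p ^+ m)%:P%:P * G N m.-1 n
     - (p ^+ m * (1 - p ^+ n) * r)%:P%:P * (match n with 0 => 0 | n'.+1 => G N m n' end).
Proof.
move=> mN; rewrite G2X E2 addrK S1eq -(E3 n mN).
rewrite -big_split /=; apply: eq_bigr => k _; rewrite /T polyCCB; ring.
Qed.

Lemma bihermS m n : biherm p r m.+1 n =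
  2%:R%:P%:P * ('X * biherm p r m n) - (1 - p ^+ m)%:P%:P * (biherm_pair p r m).1 n
     - (p ^+ m * (1 - p ^+ n) * r)%:P%:P * (match n with 0 => 0 | n'.+1 => biherm p r m n' end).
Proof. by rewrite /biherm bpS. Qed.

Lemma bp1 m n : (biherm_pair p r m.+1).1 n = biherm p r m n.
Proof. by rewrite bpS. Qed.

Lemma mainG m : forall N n, (m < N)%N -> biherm p r m n = G N m n.
Proof.
elim/ltn_ind: m => m IH N n mN.
case: m IH mN => [|m] IH mN.
  case: N mN => [//|N'] _.
  rewrite /G big_ord_recl big1 ?addr0; last first.
    by move=> i _; rewrite T_zero // /bump min0n.
  rewrite /T c0 /X /Y /biherm /= !subn0.
  have -> : hermite p 0 = 1 by [].
  by rewrite !rmorph1 !mul1r.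
have e1 : (1 - p ^+ m)%:P%:P * (biherm_pair p r m).1 n = (1 - p ^+ m)%:P%:P * G N m.-1 n.
  case: m IH mN => [|m'] IH mN; first by rewrite expr0 subrr !polyC0 !mul0r.
  by rewrite bp1 (IH m' _ N) //; lia.
have e2 : (match n with 0 => 0 | n'.+1 => biherm p r m n' end) = (match n with 0 => 0 | n'.+1 => G N m n' end).
  clear e1; case: n => [//|n'].
  by rewrite (IH m _ N) //; lia.
rewrite bihermS Grec // e1 e2 (IH m _ N) //; lia.
Qed.

End H.
Unset Implicit Arguments.

Theorem mainTheorem1 (R : realType) (p r : R[i])
  (hp : forall N : nat, (0 < N)%N -> p ^+ N != 1) :
  (forall m n : nat,
    biherm p r m n =
    \sum_(0 <= k < (minn m n).+1)
      (((-1) ^+ k * p ^+ 'C(k, 2) * qpoch p p m * qpoch p p n * r ^+ k)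
        / (qpoch p p (m - k) * qpoch p p (n - k) * qpoch p p k))%:P%:P
      * (hermite p (m - k))^:P * (hermite p (n - k))%:P)
  /\ (forall m n : nat, biherm p r m n = swapXY (biherm p r n m)).
Proof.
have hQ : forall k : nat, 1 - p ^+ k.+1 != 0.
  by move=> k; rewrite subr_eq0 eq_sym hp.
split.
  move=> m n.
  rewrite (mainG r hQ (N := m.+1)) // (@Gwiden _ p r m.+1 (minn m n).+1) //; last by rewrite ltnS geq_minl.
  rewrite big_mkord /G; apply: eq_bigr => k _.
  have km : (k <= m)%N by have := ltn_ord k; rewrite ltnS leq_min => /andP [].
  have kn : (k <= n)%N by have := ltn_ord k; rewrite ltnS leq_min => /andP [].
  rewrite /T /X /Y; congr (_ * _ * _); congr (_%:P%:P).
  rewrite /c /A -/(Q p (m - k)) -/(Q p (n - k)) -/(Q p k) -/(Q p m) -/(Q p n).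
  have eQ : forall j a, (j <= a)%N -> Q p a = Q p (a - j) * d p a j.
    by move=> j a hj; rewrite -{1}(subnK hj) Qd subnK.
  rewrite (eQ k m km) (eQ k n kn).
  have h1 := QnZ hQ (m - k); have h2 := QnZ hQ (n - k); have h3 := QnZ hQ k.
  field; by rewrite h1 h2 h3.
move=> m n.
rewrite (mainG r hQ (N := (m + n).+1)) ?(mainG r hQ (N := (m + n).+1) (m := n)); try lia.
rewrite /G rmorph_sum; apply: eq_bigr => k _.
rewrite /T /X /Y.
have -> : c p r n m k = c p r m n k by rewrite /c mulrAC.
rewrite !rmorphM /= !swapXY_polyC !map_polyC /= swapXY_map_polyC. ring.
Qed.
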